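(* Let $1<\beta<2$ and let $N\ge 5$ be an integer, $h=(b-a)/N$. There exists a positive constant $c_1$, independent of $h$ and of $\bm v$, such that for every nonzero $\bm v\in V_h$ \[ (-\delta^{\beta}_{x,+}\bm v,\bm v)=(-\delta^{\beta}_{x,-}\bm v,\bm v)> c_1\ln 2\,\|\bm v\|^2 . \]
   Context: Let $a<b$, $N$ a positive integer, $h=(b-a)/N$, grid $x_i=a+ih$, $i=0,\dots,N$. $V_h$ is the space of real grid functions $\bm v=(v_0,\dots,v_N)$ with $v_0=v_N=0$; for $\bm u,\bm v\in V_h$ define $(\bm u,\bm v)=h\sum_{i=1}^{N-1}u_iv_i$ and $\|\bm u\|=\sqrt{(\bm u,\bm u)}$. For $1<\beta<2$ let $g^{(\beta)}_k=(-1)^k\binom{\beta}{k}$, $\lambda_1=\frac{\beta^2+3\beta+2}{12}$, $\lambda_0=\frac{4-\beta^2}{6}$, $\lambda_{-1}=\frac{\beta^2-3\beta+2}{12}$, and $\omega^{(\beta)}_0=\lambda_1g^{(\beta)}_0$, $\omega^{(\beta)}_1=\lambda_1g^{(\beta)}_1+\lambda_0g^{(\beta)}_0$, $\omega^{(\beta)}_k=\lambda_1g^{(\beta)}_k+\lambda_0g^{(\beta)}_{k-1}+\lambda_{-1}g^{(\beta)}_{k-2}$ for $k\ge2$. For $\bm v\in V_h$ and $1\le i\le N-1$ define the weighted shifted Grünwald difference operators $(\delta^{\beta}_{x,+}\bm v)_i=h^{-\beta}\sum_{k=0}^{i+1}\omega^{(\beta)}_k v_{i-k+1}$ and $(\delta^{\beta}_{x,-}\bm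 v)_i=h^{-\beta}\sum_{k=0}^{N-i+1}\omega^{(\beta)}_k v_{i+k-1}$ (entries with index $0$ or $N$ are zero), and $(\delta^\beta_{x,\pm}\bm v,\bm v)=h\sum_{i=1}^{N-1}(\delta^\beta_{x,\pm}\bm v)_iv_i$. *)

(* Defs.v *)
From Stdlib Require Import Reals Lra Lia.
Open Scope R_scope.

(* sum_{i=m}^{n} f i  (empty, = 0, when n < m) *)
Fixpoint sum_lt (n : nat) (f : nat -> R) : R :=
  match n with
  | O => 0
  | S n' => sum_lt n' f + f n'
  end.
Definition rsum (m n : nat) (f : nat -> R) : R :=
  sum_lt (S n - m) (fun j => f (m + j)%nat).

Fixpoint gbinom (beta : R) (k : nat) : R :=
  match k with
  | O => 1
  | S k' => gbinom beta k' * (beta - INR k') / INR (S k')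
  end.

Definition gcoef (beta : R) (k : nat) : R := (-1) ^ k * gbinom beta k.

Definition lam1 (beta : R) : R := (beta ^ 2 + 3 * beta + 2) / 12.
Definition lam0 (beta : R) : R := (4 - beta ^ 2) / 6.
Definition lamm1 (beta : R) : R := (beta ^ 2 - 3 * beta + 2) / 12.

Definition omega (beta : R) (k : nat) : R :=
  match k with
  | O => lam1 beta * gcoef beta 0
  | S O => lam1 beta * gcoef beta 1 + lam0 beta * gcoef beta 0
  | S (S j) => lam1 beta * gcoef beta k + lam0 beta * gcoef beta (S j)
               + lamm1 beta * gcoef beta j
  end.

Definition mesh (a b : R) (N : nat) : R := (b - a) / INR N.

(* grid functions are v : nat -> R, only indices 0..N matter;
   v belongs to V_h iff v_0 = v_N = 0 *)
Definition in_Vh (N : nat) (v : nat -> R) : Prop := v 0%nat = 0 /\ v N = 0.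

Definition ip (a b : R) (N : nat) (u v : nat -> R) : R :=
  mesh a b N * rsum 1 (N - 1) (fun i => u i * v i).
Definition nrm (a b : R) (N : nat) (v : nat -> R) : R := sqrt (ip a b N v v).

(* weighted shifted Gruenwald operators (values at 1 <= i <= N-1) *)
Definition delta_plus (beta a b : R) (N : nat) (v : nat -> R) (i : nat) : R :=
  Rpower (mesh a b N) (- beta) *
  rsum 0 (S i) (fun k => omega beta k * v (S i - k)%nat).
Definition delta_minus (beta a b : R) (N : nat) (v : nat -> R) (i : nat) : R :=
  Rpower (mesh a b N) (- beta) *
  rsum 0 (S (N - i)) (fun k => omega beta k * v (i + k - 1)%nat).

(* Main.v *)
Require Import Defs.
From Stdlib Require Import Reals Lra Lia.
Open Scope R_scope.

Lemma sl_ext n f g : (forall j, (j < n)%nat -> f j = g j) -> sum_lt n f = sum_lt n g.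
Proof. induction n; simpl; intros H; auto. rewrite IHn by (intros; apply H; lia). rewrite (H n) by lia. auto. Qed.

Lemma sl_le n f g : (forall j, (j < n)%nat -> f j <= g j) -> sum_lt n f <= sum_lt n g.
Proof. induction n; simpl; intros H; [lra|]. pose proof (IHn (fun j Hj => H j ltac:(lia))). pose proof (H n ltac:(lia)). lra. Qed.

Lemma sl_plus n f g : sum_lt n (fun j => f j + g j) = sum_lt n f + sum_lt n g.
Proof. induction n; simpl; [lra|]. rewrite IHn; lra. Qed.

Lemma sl_scal n c f : sum_lt n (fun j => c * f j) = c * sum_lt n f.
Proof. induction n; simpl; [lra|]. rewrite IHn; lra. Qed.

Lemma sl_zero n f : (forall j, (j < n)%nat -> f j = 0) -> sum_lt n f = 0.
Proof. induction n; simpl; intros H; [lra|]. rewrite IHn by (intros; apply H; lia). rewrite H by lia. lra. Qed.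

Lemma sl_first n f : sum_lt (S n) f = f 0%nat + sum_lt n (fun j => f (S j)).
Proof. induction n; simpl; [lra|]. simpl in IHn. rewrite IHn. lra. Qed.

Lemma sl_split a b f : sum_lt (a + b) f = sum_lt a f + sum_lt b (fun j => f (a + j)%nat).
Proof. induction b; simpl. rewrite Nat.add_0_r; lra. rewrite Nat.add_succ_r. simpl. rewrite IHb. lra. Qed.

Lemma sl_exch n m F : sum_lt n (fun i => sum_lt m (fun k => F i k)) = sum_lt m (fun k => sum_lt n (fun i => F i k)).
Proof. induction n; simpl. rewrite sl_zero; auto. rewrite IHn. rewrite <- sl_plus. auto. Qed.

Lemma sl_extend n m f : (n <= m)%nat -> (forall k, (n <= k < m)%nat -> f k = 0) -> sum_lt n f = sum_lt m f.
Proof. intros Hnm H. replace m with (n + (m - n))%nat by lia. rewrite sl_split.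
 rewrite (sl_zero (m - n)); [lra|]. intros; apply H; lia. Qed.

Lemma sl_nonneg n f : (forall j, (j < n)%nat -> 0 <= f j) -> 0 <= sum_lt n f.
Proof. intros H. rewrite <- (sl_zero n (fun _ => 0)) by auto. apply sl_le. auto. Qed.

Lemma sl_pos n f j0 : (forall j, (j < n)%nat -> 0 <= f j) -> (j0 < n)%nat -> 0 < f j0 -> 0 < sum_lt n f.
Proof. induction n; intros H Hj Hp; [lia|]. simpl. destruct (Nat.eq_dec j0 n).
 subst. pose proof (sl_nonneg n f (fun j Hj => H j ltac:(lia))). lra.
 pose proof (IHn (fun j Hj => H j ltac:(lia)) ltac:(lia) Hp). pose proof (H n ltac:(lia)). lra. Qed.

Lemma shift_le d n f : (forall x, 0 <= f x) -> f 0%nat = 0 ->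
  sum_lt n (fun j => f (1 + j - d)%nat) <= sum_lt n (fun j => f (1 + j)%nat).
Proof. intros Hp H0. revert n; induction d; intros n.
 - apply Req_le, sl_ext; intros; f_equal; lia.
 - destruct n; [simpl; lra|]. rewrite sl_first. replace (1 + 0 - S d)%nat with 0%nat by lia. rewrite H0.
   rewrite (sl_ext n _ (fun j => f (1 + j - d)%nat)) by (intros; f_equal; lia).
   pose proof (IHd n). pose proof (Hp (1 + n)%nat). cbn [sum_lt]. lra. Qed.

Lemma shift_eq d n H : (forall i, (i <= d)%nat -> H i = 0) -> (forall i, (n < i)%nat -> H i = 0) ->
  sum_lt n (fun j => H (1 + j)%nat) = sum_lt n (fun j => H (1 + j + d)%nat).
Proof. intros H1 H2.
 assert (E1 : sum_lt (n + d) (fun j => H (1 + j)%nat) = sum_lt n (fun j => H (1 + j)%nat)).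
 { rewrite sl_split. rewrite (sl_zero d); [lra|]. intros; apply H2; lia. }
 assert (E2 : sum_lt (d + n) (fun j => H (1 + j)%nat) = sum_lt n (fun j => H (1 + j + d)%nat)).
 { rewrite sl_split. rewrite (sl_zero d); [|intros; apply H1; lia]. rewrite Rplus_0_l. apply sl_ext; intros; f_equal; lia. }
 rewrite <- E1, <- E2, Nat.add_comm. auto. Qed.

Section C.
Variable beta : R.
Hypothesis Hb1 : 1 < beta.
Hypothesis Hb2 : beta < 2.
Local Notation g := (gcoef beta).

Lemma sl_S n f : sum_lt (S n) f = sum_lt n f + f n. Proof. reflexivity. Qed.

Lemma g_S k : g (S k) = g k * (INR k - beta) / INR (S k).
Proof. unfold gcoef. cbn [gbinom pow]. assert (INR (S k) <> 0) by (apply not_0_INR; lia). field; auto. Qed.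

Lemma g0 : g 0 = 1. Proof. unfold gcoef; simpl; lra. Qed.
Lemma g1 : g 1 = - beta. Proof. rewrite g_S, g0. simpl. field. Qed.
Lemma g2 : g 2 = beta * (beta - 1) / 2. Proof. rewrite g_S, g1. simpl. field. Qed.
Lemma g3 : g 3 = beta * (beta - 1) * (2 - beta) / 6. Proof. rewrite g_S, g2. simpl. field. Qed.

Lemma g_pos k : (2 <= k)%nat -> 0 < g k.
Proof. induction k; intros Hk; [lia|]. destruct (Nat.eq_dec k 1). subst. rewrite g2. nra.
 rewrite g_S. assert (INR 2 <= INR k) by (apply le_INR; lia). simpl in H.
 assert (0 < INR (S k)) by (apply lt_0_INR; lia). pose proof (IHk ltac:(lia)).
 apply Rmult_lt_0_compat; [|apply Rinv_0_lt_compat; auto]. nra. Qed.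

Lemma omega_SS j : omega beta (S (S j)) = lam1 beta * g (S (S j)) + lam0 beta * g (S j) + lamm1 beta * g j.
Proof. reflexivity. Qed.

Lemma gsum m : sum_lt (S m) g = g m * (beta - INR m) / beta.
Proof. induction m. simpl. rewrite g0. field. lra.
 cbn [sum_lt]. cbn [sum_lt] in IHm. rewrite IHm. rewrite g_S. rewrite S_INR.
 assert (INR m + 1 <> 0) by (pose proof (pos_INR m); lra). field. split; lra. Qed.

Lemma osum j : sum_lt (S (S (S j))) (omega beta) =
  lam1 beta * sum_lt (S (S (S j))) g + lam0 beta * sum_lt (S (S j)) g + lamm1 beta * sum_lt (S j) g.
Proof. induction j.
 - cbn [sum_lt]. cbn [omega]. lra.
 - rewrite (sl_S (S (S (S j)))), IHj, (sl_S (S (S (S j))) g), (sl_S (S (S j)) g), (sl_S (S j) g), omega_SS. lra. Qed.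

Lemma omega02 : 0 <= omega beta 0 + omega beta 2.
Proof. cbn [omega]. rewrite g0, g1, g2. unfold lam1, lam0, lamm1.
 set (s := beta - 1). replace beta with (1 + s) by (unfold s; lra).
 assert (0 < s) by (unfold s; lra). assert (0 < s^2) by nra. assert (0 < s^3) by nra. assert (0 < s^4) by nra. nra. Qed.

Lemma omega3 : 0 <= omega beta 3.
Proof. rewrite omega_SS, g3, g2, g1. unfold lam1, lam0, lamm1.
 set (s := beta - 1). replace beta with (1 + s) by (unfold s; lra).
 assert (0 < s) by (unfold s; lra). assert (s < 1) by (unfold s; lra).
 assert (0 <= s * (1 - s) * (s^3 + 12 * s^2 + 41 * s + 30)).
 { apply Rmult_le_pos; [nra|]. nra. }
 match goal with |- 0 <= ?e => replace e with (s * (1 - s) * (s^3 + 12 * s^2 + 41 * s + 30) / 72) by field end.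
 lra. Qed.

Lemma omega_nonneg k : (3 <= k)%nat -> 0 <= omega beta k.
Proof. intros Hk. destruct (Nat.eq_dec k 3). subst; apply omega3.
 destruct k as [|[|j]]; try lia. rewrite omega_SS.
 rewrite (g_S (S j)), (g_S j).
 assert (HJ : 2 <= INR j) by (apply (le_INR 2); lia). pose proof (g_pos j ltac:(lia)).
 rewrite !S_INR. set (x := g j). set (K := INR j). assert (HK : 2 <= K) by (unfold K; lra). assert (Hx : 0 < x) by (unfold x; lra). clearbody x K.
 unfold lam1, lam0, lamm1.
 assert (E : (beta ^ 2 + 3 * beta + 2) / 12 * (x * (K - beta) / (K + 1) * (K + 1 - beta) / (K + 1 + 1)) +
    (4 - beta ^ 2) / 6 * (x * (K - beta) / (K + 1)) + (beta ^ 2 - 3 * beta + 2) / 12 * x =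
    x * ((beta ^ 2 + 3 * beta + 2) * (K - beta) * (K + 1 - beta) + 2 * (4 - beta ^ 2) * (K - beta) * (K + 2)
         + (beta ^ 2 - 3 * beta + 2) * (K + 2) * (K + 1)) / (12 * (K + 1) * (K + 2))).
 { field. split; lra. }
 rewrite E. apply Rmult_le_pos; [|apply Rlt_le, Rinv_0_lt_compat; nra].
 apply Rmult_le_pos; [lra|].
 set (s := beta - 1). set (t := K - 2).
 replace beta with (1 + s) by (unfold s; lra). replace K with (2 + t) by (unfold t; lra).
 assert (0 < s) by (unfold s; lra). assert (s < 1) by (unfold s; lra). assert (0 <= t) by (unfold t; lra).
 assert (0 <= ((s - 1) * (s + 6))^2) by apply pow2_ge_0.
 assert (0 <= t * (48 - 30 * s - 6 * s^2)) by (apply Rmult_le_pos; nra).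
 assert (0 <= t * t) by nra.
 match goal with |- 0 <= ?e => replace e with (12 * (t * t) + t * (48 - 30 * s - 6 * s^2) + ((s - 1) * (s + 6))^2) by ring end.
 lra. Qed.
End C.

Lemma bern x a : 0 < x -> 0 <= a <= 1 -> Rpower x a <= 1 + a * (x - 1).
Proof. intros Hx Ha. unfold Rpower. set (L := ln x). assert (EX : exp L = x) by (apply exp_ln; auto).
 set (p := exp (a * L)).
 assert (E1 : exp L = p * exp ((1 - a) * L)) by (unfold p; rewrite <- exp_plus; f_equal; ring).
 assert (E2 : 1 = p * exp (- (a * L))) by (unfold p; rewrite <- exp_plus; replace (a * L + - (a * L)) with 0 by ring; now rewrite exp_0).
 pose proof (exp_ineq1_le ((1 - a) * L)). pose proof (exp_ineq1_le (- (a * L))).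
 assert (Hp : 0 < p) by apply exp_pos.
 assert (p * (1 + (1 - a) * L) <= x) by (rewrite <- EX, E1; apply Rmult_le_compat_l; lra).
 assert (p * (1 + - (a * L)) <= 1) by (rewrite E2 at 2; apply Rmult_le_compat_l; lra).
 nra. Qed.

Lemma neg_div a b : 0 <= a -> 0 < b -> -(a / b) <= 0.
Proof. intros. unfold Rdiv. pose proof (Rinv_0_lt_compat b H0). assert (0 <= a * / b) by (apply Rmult_le_pos; lra). lra. Qed.

Section D.
Variable beta : R.
Hypothesis Hb1 : 1 < beta.
Hypothesis Hb2 : beta < 2.
Local Notation g := (gcoef beta).
Definition T m := g m * (INR m - beta) / beta.

Lemma T_S m : T (S m) = T m * (INR (S m) - beta) / INR (S m).
Proof. unfold T. rewrite g_S, S_INR. assert (INR m + 1 <> 0) by (pose proof (pos_INR m); lra). field. split; lra. Qed.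

Lemma T_pos m : (2 <= m)%nat -> 0 < T m.
Proof. intros. unfold T. pose proof (g_pos beta Hb1 Hb2 m H). assert (2 <= INR m) by (apply (le_INR 2); auto).
 apply Rmult_lt_0_compat; [|apply Rinv_0_lt_compat; lra]. nra. Qed.

Lemma T2 : T 2 = (beta - 1) * (2 - beta) / 2.
Proof. unfold T. rewrite g2. simpl. field. lra. Qed.

Lemma rp_step (m : R) : 2 <= m -> Rpower (m - 1) beta <= (m + 1 - beta) / (m + 1) * Rpower m beta.
Proof. intros Hm. set (q := (m - 1) / m).
 assert (Eq : m - 1 = m * q) by (unfold q; field; lra).
 assert (Hq : 0 < q) by (unfold q; apply Rmult_lt_0_compat; [lra|apply Rinv_0_lt_compat; lra]).
 rewrite Eq, <- Rpower_mult_distr by lra.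
 replace beta with (1 + (beta - 1)) at 2 by ring. rewrite Rpower_plus, Rpower_1 by auto.
 pose proof (bern q (beta - 1) Hq ltac:(lra)).
 assert (Hr : 0 < Rpower m beta) by apply exp_pos.
 assert (Hr2 : 0 < Rpower q (beta - 1)) by apply exp_pos.
 assert (q * (1 + (beta - 1) * (q - 1)) <= (m + 1 - beta) / (m + 1)).
 { unfold q. apply Rminus_le. 
   match goal with |- ?e <= 0 => replace e with (- ((m - beta + 1) / (m * m * (m + 1)))) by (field; lra) end.
   apply neg_div; [lra|]. nra. }
 assert (q * Rpower q (beta - 1) <= (m + 1 - beta) / (m + 1)).
 { eapply Rle_trans; [|eauto]. apply Rmult_le_compat_l; lra. }
 rewrite (Rmult_comm (Rpower m beta)). apply Rmult_le_compat_r; lra. Qed.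

Lemma T_decay i : T (2 + i) * Rpower (INR (2 + i) - 1) beta >= T 2.
Proof. induction i.
 - simpl. replace (1 + 1 - 1) with 1 by ring. unfold Rpower. rewrite ln_1, Rmult_0_r, exp_0. lra.
 - replace (2 + S i)%nat with (S (2 + i)) by lia. rewrite T_S.
   pose proof (T_pos (2 + i) ltac:(lia)).
   assert (Hm : 2 <= INR (2 + i)) by (apply (le_INR 2); lia).
   pose proof (rp_step _ Hm).
   rewrite S_INR. replace (INR (2 + i) + 1 - 1) with (INR (2 + i)) by ring.
   assert (T (2 + i) * Rpower (INR (2 + i) - 1) beta <= T (2 + i) * ((INR (2 + i) + 1 - beta) / (INR (2 + i) + 1) * Rpower (INR (2 + i)) beta)).
   { apply Rmult_le_compat_l; lra. }
   match goal with |- ?l >= _ => replace l with (T (2 + i) * ((INR (2 + i) + 1 - beta) / (INR (2 + i) + 1) * Rpower (INR (2 + i)) beta)) by (field; lra) end.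
   lra. Qed.

Lemma G_bound N : (5 <= N)%nat -> - sum_lt (S N) (omega beta) >= T N / 2.
Proof. intros HN. destruct N as [|[|j]]; try lia.
 rewrite osum by auto. rewrite !gsum.
 rewrite (g_S beta (S j)), (g_S beta j). unfold T. rewrite (g_S beta (S j)), (g_S beta j).
 assert (HJ : 3 <= INR j) by (pose proof (le_INR 3 j ltac:(lia)) as HH; simpl in HH; lra). pose proof (g_pos beta Hb1 Hb2 j ltac:(lia)).
 rewrite !S_INR. set (x := g j). set (K := INR j). assert (HK : 3 <= K) by (unfold K; lra).
 assert (Hx : 0 < x) by (unfold x; lra). clearbody x K.
 unfold lam1, lam0, lamm1. set (m := K + 1 + 1).
 set (P2 := (beta + 4) * (beta - 1) * (m - 1 - beta) * (m - beta) + 2 * (4 - beta * beta) * m * (m - 1 - beta)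
    + (beta * beta - 3 * beta + 2) * m * (m - 1)).
 apply Rle_ge, Rminus_le.
 match goal with |- ?e <= 0 => replace e with (- (x * (m - 2 - beta) * P2 / (12 * beta * (m - 1) * m))) by (unfold P2, m; field; repeat split; lra) end.

 assert (0 <= P2).
 { unfold P2. set (s := beta - 1). set (t := m - 5).
   replace beta with (1 + s) by (unfold s; lra). replace m with (5 + t) by (unfold t; lra).
   assert (0 < s) by (unfold s; lra). assert (s < 1) by (unfold s; lra). assert (0 <= t) by (unfold t, m; lra).
   assert (0 <= t * (48 - 12 * s - 6 * s^2)) by (apply Rmult_le_pos; nra).
   assert (0 <= t * t) by nra. assert (0 <= t * (s * s)) by nra.
   assert (0 <= 90 - 50 * s - 13 * s^2 + 8 * s^3 + s^4) by nra.
   match goal with |- 0 <= ?e => replace e with (6 * (t * t) + t * (48 - 12 * s - 6 * s^2) + (90 - 50 * s - 13 * s^2 + 8 * s^3 + s^4)) by ring end.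
   lra. }
 apply neg_div; [|unfold m; nra].
 apply Rmult_le_pos; [|auto]. apply Rmult_le_pos; unfold m; try lra. all: lra. Qed.
End D.

Definition wv (N : nat) (v : nat -> R) (j : nat) : R := if (j <=? N)%nat then v j else 0.
Definition Cp (N : nat) (w : nat -> R) (k : nat) : R := sum_lt (N - 1) (fun j => w (1 + j)%nat * w (2 + j - k)%nat).

Lemma wv_le N v j : (j <= N)%nat -> wv N v j = v j.
Proof. intros. unfold wv. destruct (Nat.leb_spec j N); [auto|lia]. Qed.
Lemma wv_gt N v j : (N < j)%nat -> wv N v j = 0.
Proof. intros. unfold wv. destruct (Nat.leb_spec j N); [lia|auto]. Qed.

Section M.
Variables (beta a b : R) (N : nat) (v : nat -> R).
Hypothesis HN : (5 <= N)%nat.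
Hypothesis Hv : in_Vh N v.
Local Notation w := (wv N v).
Local Notation hp := (Rpower (mesh a b N) (- beta)).

Lemma w0 : w 0 = 0. Proof. rewrite wv_le by lia. apply Hv. Qed.
Lemma wbig i : (N <= i)%nat -> w i = 0.
Proof. intros. destruct (Nat.eq_dec i N). subst. rewrite wv_le by lia. apply Hv. apply wv_gt; lia. Qed.

Lemma rsum1 f : rsum 1 (N - 1) f = sum_lt (N - 1) (fun j => f (1 + j)%nat).
Proof. unfold rsum. replace (S (N - 1) - 1)%nat with (N - 1)%nat by lia. auto. Qed.

Lemma plus_form : rsum 1 (N - 1) (fun i => - delta_plus beta a b N v i * v i)
  = - hp * sum_lt (S N) (fun k => omega beta k * Cp N w k).
Proof. rewrite rsum1. unfold Cp.
 rewrite (sl_ext _ _ (fun j => - hp * sum_lt (S N) (fun k => omega beta k * (w (1 + j)%nat * w (2 + j - k)%nat)))).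
 - rewrite sl_scal. f_equal. rewrite sl_exch. apply sl_ext. intros. rewrite <- sl_scal. auto.
 - intros j Hj. unfold delta_plus, rsum. rewrite Nat.sub_0_r.
   rewrite (wv_le N v (1 + j)) by lia.
   rewrite (sl_ext _ _ (fun k => omega beta k * w (2 + j - k)%nat)).
   2:{ intros k Hk. replace (S (1 + j) - (0 + k))%nat with (2 + j - k)%nat by lia. rewrite Nat.add_0_l. rewrite wv_le by lia. auto. }
   rewrite (sl_extend (S (S (1 + j))) (S N)).
   + rewrite (sl_ext (S N) (fun k => omega beta k * (v (1 + j)%nat * w (2 + j - k)%nat))
        (fun k => v (1 + j)%nat * (omega beta k * w (2 + j - k)%nat))) by (intros; ring).
     rewrite sl_scal. ring.
   + lia.
   + intros k Hk. replace (2 + j - k)%nat with 0%nat by lia. rewrite w0. ring.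
Qed.

Definition Dp k := sum_lt (N - 1) (fun j => w (1 + j)%nat * w (j + k)%nat).
Definition Sq := sum_lt (N - 1) (fun j => w (1 + j)%nat * w (1 + j)%nat).

Lemma minus_form : rsum 1 (N - 1) (fun i => - delta_minus beta a b N v i * v i)
  = - hp * sum_lt (S N) (fun k => omega beta k * Dp k).
Proof. rewrite rsum1. unfold Dp.
 rewrite (sl_ext _ _ (fun j => - hp * sum_lt (S N) (fun k => omega beta k * (w (1 + j)%nat * w (j + k)%nat)))).
 - rewrite sl_scal. f_equal. rewrite sl_exch. apply sl_ext. intros. rewrite <- sl_scal. auto.
 - intros j Hj. unfold delta_minus, rsum. rewrite Nat.sub_0_r.
   rewrite (wv_le N v (1 + j)) by lia.
   rewrite (sl_ext _ _ (fun k => omega beta k * w (j + k)%nat)).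
   2:{ intros k Hk. replace (1 + j + (0 + k) - 1)%nat with (j + k)%nat by lia. rewrite Nat.add_0_l. rewrite wv_le by lia. auto. }
   rewrite (sl_extend (S (S (N - (1 + j)))) (S N)).
   + rewrite (sl_ext (S N) (fun k => omega beta k * (v (1 + j)%nat * w (j + k)%nat))
        (fun k => v (1 + j)%nat * (omega beta k * w (j + k)%nat))) by (intros; ring).
     rewrite sl_scal. ring.
   + lia.
   + intros k Hk. rewrite wbig by lia. ring.
Qed.

Lemma DC k : Dp k = Cp N w k.
Proof. unfold Dp, Cp. destruct k as [|d].
 - transitivity (sum_lt (N - 1) (fun j => (fun i => w i * w (i - 1)%nat) (1 + j)%nat)).
   { apply sl_ext. intros. replace (1 + j - 1)%nat with j by lia. rewrite Nat.add_0_r. auto. }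
   rewrite (shift_eq 1 (N - 1) (fun i => w i * w (i - 1)%nat)).
   + apply sl_ext. intros. replace (1 + j + 1 - 1)%nat with (1 + j)%nat by lia.
     replace (2 + j - 0)%nat with (1 + j + 1)%nat by lia. ring.
   + intros i Hi. replace (i - 1)%nat with 0%nat by lia. rewrite w0. ring.
   + intros i Hi. rewrite wbig by lia. ring.
 - symmetry. transitivity (sum_lt (N - 1) (fun j => (fun i => w i * w (i - d)%nat) (1 + j)%nat)).
   { apply sl_ext. intros. replace (2 + j - S d)%nat with (1 + j - d)%nat by lia. auto. }
   rewrite (shift_eq d (N - 1) (fun i => w i * w (i - d)%nat)).
   + apply sl_ext. intros. replace (1 + j + d - d)%nat with (1 + j)%nat by lia.
     replace (j + S d)%nat with (1 + j + d)%nat by lia. ring.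
   + intros i Hi. replace (i - d)%nat with 0%nat by lia. rewrite w0. ring.
   + intros i Hi. rewrite wbig by lia. ring.
Qed.

Lemma C1 : Cp N w 1 = Sq.
Proof. unfold Cp, Sq. apply sl_ext. intros. replace (2 + j - 1)%nat with (1 + j)%nat by lia. auto. Qed.

Lemma C20 : Cp N w 2 = Cp N w 0.
Proof. rewrite <- (DC 0). unfold Cp, Dp. apply sl_ext. intros. replace (2 + j - 2)%nat with (j + 0)%nat by lia. auto. Qed.

Lemma C_le k : (1 <= k)%nat -> Cp N w k <= Sq.
Proof. intros Hk. unfold Cp, Sq.
 apply Rle_trans with (sum_lt (N - 1) (fun j => (w (1 + j)%nat * w (1 + j)%nat + (fun x => w x * w x) (1 + j - (k - 1))%nat) / 2)).
 { apply sl_le. intros. replace (2 + j - k)%nat with (1 + j - (k - 1))%nat by lia. cbv beta.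
   pose proof (pow2_ge_0 (w (1 + j)%nat - w (1 + j - (k - 1))%nat)). nra. }
 unfold Rdiv. rewrite (sl_ext _ _ (fun j => / 2 * (w (1 + j)%nat * w (1 + j)%nat + (fun x => w x * w x) (1 + j - (k - 1))%nat))) by (intros; ring).
 rewrite sl_scal, sl_plus.
 pose proof (shift_le (k - 1) (N - 1) (fun x => w x * w x) ltac:(intros; nra) ltac:(cbv beta; rewrite w0; ring)).
 cbv beta in H. lra. Qed.

Lemma X_le : 1 < beta -> beta < 2 ->
  sum_lt (S N) (fun k => omega beta k * Cp N w k) <= sum_lt (S N) (omega beta) * Sq.
Proof. intros Hb1 Hb2.
 assert (E : sum_lt (S N) (omega beta) * Sq - sum_lt (S N) (fun k => omega beta k * Cp N w k)
   = sum_lt (S N) (fun k => omega beta k * (Sq - Cp N w k))).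
 { rewrite (sl_ext (S N) (fun k => omega beta k * (Sq - Cp N w k)) (fun k => Sq * omega beta k + (-1) * (omega beta k * Cp N w k))) by (intros; ring).
   rewrite sl_plus, !sl_scal. ring. }
 assert (0 <= sum_lt (S N) (fun k => omega beta k * (Sq - Cp N w k))).
 { replace (S N) with (S (S (S (N - 2)))) by lia. rewrite !sl_first.
   rewrite C1, C20. assert (0 <= omega beta 0 + omega beta 2) by (apply omega02; auto). pose proof (C_le 2 ltac:(lia)) as HC2. rewrite C20 in HC2.
   assert (0 <= sum_lt (N - 2) (fun j => omega beta (S (S (S j))) * (Sq - Cp N w (S (S (S j)))))).
   { apply sl_nonneg. intros. apply Rmult_le_pos. apply omega_nonneg; auto; lia. pose proof (C_le (S (S (S j))) ltac:(lia)). lra. }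
   nra. }
 lra. Qed.
End M.

Lemma hp_eq a b beta N : a < b -> (1 <= N)%nat ->
  Rpower (mesh a b N) (- beta) = Rpower (b - a) (- beta) * Rpower (INR N) beta.
Proof. intros Hab HN. assert (HNp : 0 < INR N) by (apply lt_0_INR; lia).
 unfold mesh, Rdiv. rewrite <- Rpower_mult_distr; [|lra|apply Rinv_0_lt_compat; auto]. f_equal.
 unfold Rpower. rewrite ln_Rinv by auto. f_equal. ring. Qed.

Theorem lemma6 (beta a b : R) (Hb1 : 1 < beta) (Hb2 : beta < 2) (Hab : a < b) :
  exists c1 : R, 0 < c1 /\
    forall (N : nat) (v : nat -> R),
      (5 <= N)%nat -> in_Vh N v -> (exists i, (i <= N)%nat /\ v i <> 0) ->
      ip a b N (fun i => - delta_plus beta a b N v i) v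
        = ip a b N (fun i => - delta_minus beta a b N v i) v /\
      ip a b N (fun i => - delta_plus beta a b N v i) v
        > c1 * ln 2 * (nrm a b N v) ^ 2.
Proof.
 assert (Hl2 : 0 < ln 2) by (pose proof ln_lt_2; lra).
 assert (HT2 : 0 < T beta 2) by (rewrite T2; nra).
 assert (HR : 0 < Rpower (b - a) (- beta)) by apply exp_pos.
 set (K0 := Rpower (b - a) (- beta) * T beta 2 / 2).
 assert (HK0 : 0 < K0) by (unfold K0; nra).
 exists (K0 / (2 * ln 2)). split.
 { apply Rmult_lt_0_compat; [auto|]. apply Rinv_0_lt_compat; lra. }
 intros N v HN Hv [i0 [Hi0 Hvi0]].
 assert (HNp : 0 < INR N) by (apply lt_0_INR; lia).
 assert (Hh : 0 < mesh a b N) by (unfold mesh; apply Rmult_lt_0_compat; [lra|apply Rinv_0_lt_compat; auto]).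
 unfold ip. cbv beta.
 rewrite (plus_form beta a b N v HN Hv), (minus_form beta a b N v HN Hv).
 rewrite (sl_ext _ (fun k => omega beta k * Dp N v k) (fun k => omega beta k * Cp N (wv N v) k))
   by (intros; rewrite DC; auto).
 split; [reflexivity|].
 set (X := sum_lt (S N) (fun k => omega beta k * Cp N (wv N v) k)).
 assert (HX := X_le beta N v HN Hv Hb1 Hb2). fold X in HX.
 assert (HG := G_bound beta Hb1 Hb2 N HN).
 assert (ESq : rsum 1 (N - 1) (fun i => v i * v i) = Sq N v).
 { rewrite (rsum1 N HN). unfold Sq. apply sl_ext. intros. rewrite wv_le by lia. auto. }
 assert (HSq : 0 < Sq N v).
 { unfold Sq. apply (sl_pos _ _ (i0 - 1)).
   - intros. nra.
   - destruct Hv as [Hv0 HvN]. destruct (Nat.eq_dec i0 0); [subst; congruence|].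
     destruct (Nat.eq_dec i0 N); [subst; congruence|]. lia.
   - destruct Hv as [Hv0 HvN]. destruct (Nat.eq_dec i0 0); [subst; congruence|].
     destruct (Nat.eq_dec i0 N); [subst; congruence|].
     rewrite wv_le by lia. replace (1 + (i0 - 1))%nat with i0 by lia.
     assert (0 < v i0 * v i0) by (destruct (Rlt_dec 0 (v i0)); nra). auto. }
 unfold nrm, ip. rewrite pow2_sqrt by (rewrite ESq; apply Rmult_le_pos; lra). rewrite ESq.
 rewrite (hp_eq a b beta N Hab ltac:(lia)).
 set (RN := Rpower (INR N) beta). set (Rb := Rpower (b - a) (- beta)). assert (HRb : 0 < Rb) by apply exp_pos.
 assert (HTN : 0 < T beta N) by (apply T_pos; auto; lia).
 assert (HD := T_decay beta Hb1 Hb2 (N - 2)). replace (2 + (N - 2))%nat with N in HD by lia.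
 assert (HRN : Rpower (INR N - 1) beta <= RN).
 { apply Rle_Rpower_l; [lra|]. assert (5 <= INR N) by (pose proof (le_INR 5 N HN) as HH; simpl in HH; lra). lra. }
 assert (HTR : T beta 2 <= T beta N * RN) by nra.
 assert (HRNp : 0 < RN) by apply exp_pos.
 assert (- (sum_lt (S N) (omega beta) * Sq N v) >= T beta N / 2 * Sq N v) by (rewrite Ropp_mult_distr_l; apply Rmult_ge_compat_r; lra).
 assert (- X >= (T beta N / 2) * Sq N v) by lra.
 assert (- (Rb * RN * X) >= Rb * RN * ((T beta N / 2) * Sq N v)).
 { assert (0 < Rb * RN) by (apply Rmult_lt_0_compat; auto). replace (- (Rb * RN * X)) with (Rb * RN * (- X)) by ring. apply Rmult_ge_compat_l; lra. }
 assert (Rb * RN * ((T beta N / 2) * Sq N v) >= K0 * Sq N v).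
 { replace K0 with (Rb * T beta 2 / 2) by reflexivity. clearbody Rb RN.
   assert (0 < Rb * Sq N v) by (apply Rmult_lt_0_compat; auto).
   assert (Rb * Sq N v * T beta 2 <= Rb * Sq N v * (T beta N * RN)) by (apply Rmult_le_compat_l; lra).
   lra. }
 replace (K0 / (2 * ln 2) * ln 2) with (K0 / 2) by (field; lra).
 assert (HY : - (Rb * RN) * X >= K0 * Sq N v) by (replace (- (Rb * RN) * X) with (- (Rb * RN * X)) by ring; lra).
 assert (mesh a b N * (- (Rb * RN) * X) >= mesh a b N * (K0 * Sq N v)) by (apply Rmult_ge_compat_l; lra).
 assert (0 < mesh a b N * (K0 * Sq N v)) by (apply Rmult_lt_0_compat; [lra|apply Rmult_lt_0_compat; lra]).
 replace (K0 / 2 * (mesh a b N * Sq N v)) with (/2 * (mesh a b N * (K0 * Sq N v))) by (field).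
 lra.
Qed.
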